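(* Let $k$ be a field and let $X$ be a locally weakly quasi-compact topological space which has a countable covering $\{U_n\}_{n\in\mathbb{N}}$ by open sets with $U_n\subset\subset X$ for every $n$. Then the family of c-soft sheaves in $\mathrm{Mod}(k_X)$ is injective with respect to the functor $\Gamma(X;\bullet)$; that is: every sheaf admits a monomorphism into a c-soft sheaf; if $0\to F'\to F\to F''\to0$ is exact in $\mathrm{Mod}(k_X)$ with $F',F$ c-soft then $F''$ is c-soft; and if $0\to F'\to F\to F''\to0$ is exact with $F'$ c-soft then $0\to\Gamma(X;F')\to\Gamma(X;F)\to\Gamma(X;F'')\to0$ is exact.
   Context: For open subsets $V\subseteq U$ of a topological space $X$, write $V\subset\subset U$ (equivalently $U\supset\supset V$) if for every covering $\{U_i\}_{i\in I}$ of $U$ by open sets there is a finite $J\subseteq I$ with $V\subseteq\bigcup_{i\in J}U_i$; $\mathrm{Op}^c(U)$ is the set of such $V$. $X$ is locally weakly quasi-compact if for all open $U,V$: (LWC1) every $x\in U$ has a fundamental system of neighborhoods in $\mathrm{Op}^c(U)$; (LWC2) for $U'\in\mathrm{Op}^c(U)$, $V'\in\mathrm{Op}^c(V)$ one has $U'\cap V'\in\mathrm{Op}^c(U\cap V)$; (LWC3) for every $U'\in\mathrm{Op}^c(U)$ there is $W\in\mathrm{Op}^c(U)$ with $U'\subset\subset W$. $\mathrm{Mod}(k_X)$ is the category of sheaves of $k$-vector spaces on $X$. A sheaf $F$ on $X$ is c-soft if for all $V,W\in\mathrm{Op}^c(X)$ with $V\subset\subset W$ the restriction morphism $\Gamma(W;F)\to\varinjlim_{U\supset\supset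 V}\Gamma(U;F)$ (limit over open $U$ with $V\subset\subset U$) is surjective. *)

(* Defs.v *)
From HB Require Import structures.
From mathcomp Require Import all_boot all_algebra.
From mathcomp Require Import boolp classical_sets cardinality topology.
Set Implicit Arguments. Unset Strict Implicit. Unset Printing Implicit Defensive.
Import GRing.Theory.
Local Open Scope classical_set_scope.
Local Open Scope ring_scope.

Section Sheaves.
Variables (k : fieldType) (T : topologicalType).

Definition relcpt (V U : set T) : Prop :=
  open V /\ open U /\ V `<=` U /\
  forall (I : Type) (C : I -> set T), (forall i, open (C i)) ->
    U `<=` \bigcup_i C i ->
    exists J : set I, finite_set J /\ V `<=` \bigcup_(i in J) C i.

Definition locally_weakly_quasi_compact : Prop :=
  (forall U, open U -> forall x, U x -> forall N, nbhs x N ->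
     exists V, relcpt V U /\ V x /\ V `<=` N) /\
  (forall U V U' V', open U -> open V -> relcpt U' U -> relcpt V' V ->
     relcpt (U' `&` V') (U `&` V)) /\
  (forall U U', open U -> relcpt U' U -> exists W, relcpt W U /\ relcpt U' W).

(* Sections and restriction maps are
   given for all subsets, but only those on open sets (with V ⊆ U for
   restrictions) matter; all axioms are imposed only there. *)
Record presheaf := Presheaf {
  sec :> set T -> lmodType k;
  res : forall U V : set T, {linear sec U -> sec V};
  res_id : forall U, open U -> forall s : sec U, res U U s = s;
  res_comp : forall U V W, open U -> open V -> open W -> W `<=` V -> V `<=` U ->
    forall s : sec U, res V W (res U V s) = res U W s }.

Definition is_sheaf (F : presheaf) : Prop :=
  forall (U : set T) (I : Type) (C : I -> set T),
    open U -> (forall i, open (C i)) -> U = \bigcup_i C i ->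
    (forall s : F U, (forall i, res F U (C i) s = 0) -> s = 0) /\
    (forall s : forall i, F (C i),
       (forall i j, res F (C i) (C i `&` C j) (s i)
                    = res F (C j) (C i `&` C j) (s j)) ->
       exists t : F U, forall i, res F U (C i) t = s i).

Definition morphism (F G : presheaf) := forall U : set T, {linear F U -> G U}.

Definition natural (F G : presheaf) (phi : morphism F G) : Prop :=
  forall U V, open U -> open V -> V `<=` U ->
    forall s : F U, phi V (res F U V s) = res G U V (phi U s).

Definition mono (F G : presheaf) (phi : morphism F G) : Prop :=
  forall U, open U -> injective (phi U).

(* Exactness of 0 -> F' -f-> F -g-> F'' -> 0 in Mod(k_X):
   f injective (kernel sheaf is 0), g o f = 0, every section of ker g is
   locally in the image of f (ker g ⊆ im f as subsheaves), and g is locally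
   surjective (im g = F'' as subsheaves). *)
Definition short_exact (F' F F'' : presheaf) (f : morphism F' F)
    (g : morphism F F'') : Prop :=
  natural f /\ natural g /\
  (forall U, open U -> injective (f U)) /\
  (forall U, open U -> forall s : F' U, g U (f U s) = 0) /\
  (forall U, open U -> forall s : F U, g U s = 0 ->
     forall x, U x -> exists V, open V /\ V x /\ V `<=` U /\
       exists s' : F' V, f V s' = res F U V s) /\
  (forall U, open U -> forall s : F'' U, forall x, U x ->
     exists V, open V /\ V x /\ V `<=` U /\
       exists t : F V, g V t = res F'' U V s).

(* c-softness: for V ⊂⊂ W in Op^c(X), Γ(W;F) -> colim_{U ⊃⊃ V} Γ(U;F) is
   surjective; the colimit is directed (LWC2), so an element is a section s
   over some U ⊃⊃ V and two such agree iff they agree on some U' ⊃⊃ V. *)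
Definition c_soft (F : presheaf) : Prop :=
  forall V W, relcpt V setT -> relcpt W setT -> relcpt V W ->
    forall U (s : F U), relcpt V U ->
      exists (t : F W) (U' : set T), relcpt V U' /\ U' `<=` U `&` W /\
        res F W U' t = res F U U' s.

End Sheaves.

(* Main.v *)
Require Import Defs.
From HB Require Import structures.
From mathcomp Require Import all_boot all_algebra.
From mathcomp Require Import boolp classical_sets cardinality topology.
Import GRing.Theory.
Local Open Scope classical_set_scope.
Local Open Scope ring_scope.


Set Implicit Arguments. Unset Strict Implicit. Unset Printing Implicit Defensive.

Section DProd.
Variables (k : fieldType) (I : Type) (A : I -> lmodType k).
Definition dprod := forall i, A i.
HB.instance Definition _ := gen_eqMixin dprod.
HB.instance Definition _ := gen_choiceMixin dprod.
Let dadd (f g : dprod) : dprod := fun i => f i + g i.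
Let dzero : dprod := fun i => 0.
Let dopp (f : dprod) : dprod := fun i => - f i.
Let dscale (a : k) (f : dprod) : dprod := fun i => a *: f i.
Let daddA : associative dadd.
Proof. by move=> f g h; apply: functional_extensionality_dep => i; rewrite /dadd addrA. Qed.
Let daddC : commutative dadd.
Proof. by move=> f g; apply: functional_extensionality_dep => i; rewrite /dadd addrC. Qed.
Let dadd0 : left_id dzero dadd.
Proof. by move=> f; apply: functional_extensionality_dep => i; rewrite /dadd /dzero add0r. Qed.
HB.instance Definition _ := @GRing.isNmodule.Build dprod dzero dadd daddA daddC dadd0.
Let daddN : left_inverse (dzero : dprod) dopp dadd.
Proof. by move=> f; apply: functional_extensionality_dep => i; rewrite /dadd /dopp /dzero addNr. Qed.
HB.instance Definition _ := @GRing.Nmodule_isZmodule.Build dprod dopp daddN.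
Let dsA a b f : dscale a (dscale b f) = dscale (a * b) f.
Proof. by apply: functional_extensionality_dep => i; rewrite /dscale scalerA. Qed.
Let ds1 : left_id 1 dscale.
Proof. by move=> f; apply: functional_extensionality_dep => i; rewrite /dscale scale1r. Qed.
Let dsDr : right_distributive dscale +%R.
Proof. by move=> a f g; apply: functional_extensionality_dep => i; rewrite /dscale scalerDr. Qed.
Let dsDl v : {morph dscale^~ v : a b / a + b}.
Proof. by move=> a b; apply: functional_extensionality_dep => i; rewrite /dscale scalerDl. Qed.
HB.instance Definition _ := @GRing.Zmodule_isLmodule.Build k dprod dscale dsA ds1 dsDr dsDl.
Lemma dprod_addE (f g : dprod) i : (f + g) i = f i + g i. Proof. by []. Qed.
Lemma dprod_scaleE a (f : dprod) i : (a *: f) i = a *: f i. Proof. by []. Qed.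
Lemma dprod_zeroE i : (0 : dprod) i = 0. Proof. by []. Qed.
End DProd.


Set Implicit Arguments. Unset Strict Implicit. Unset Printing Implicit Defensive.

Section Stalk.
Variables (k : fieldType) (T : topologicalType) (F : presheaf k T) (x : T).

Record germ := Germ { gV : set T; gop : open gV; gin : gV x; gs : F gV }.

Definition grl (g h : germ) : Prop := exists W, open W /\ W x /\ W `<=` gV g /\
  W `<=` gV h /\ res F (gV g) W (gs g) = res F (gV h) W (gs h).

Lemma grel_shrink g h W W' : open W -> open W' -> W' `<=` W -> W `<=` gV g -> W `<=` gV h ->
  res F (gV g) W (gs g) = res F (gV h) W (gs h) ->
  res F (gV g) W' (gs g) = res F (gV h) W' (gs h).
Proof.
move=> oW oW' sW sg sh e.
rewrite -(res_comp (gop g) oW oW' sW sg) -(res_comp (gop h) oW oW' sW sh) e //.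
Qed.

Lemma grel_refl g : grl g g.
Proof.
exists (gV g); split; first exact: gop.
split; first exact: gin.
by split => //; split.
Qed.

Lemma grel_sym g h : grl g h -> grl h g.
Proof. by case=> W [oW [Wx [s1 [s2 e]]]]; exists W. Qed.

Lemma grel_trans g h l : grl g h -> grl h l -> grl g l.
Proof.
case=> W [oW [Wx [s1 [s2 e]]]] [W' [oW' [Wx' [s1' [s2' e']]]]].
exists (W `&` W'); split; first exact: openI.
split; first by split.
split; first by move=> y [/s1].
split; first by move=> y [_ /s2'].
have oI : open (W `&` W') by exact: openI.
rewrite (@grel_shrink g h W (W `&` W') oW oI _ s1 s2 e); last by move=> y [].
apply: (@grel_shrink h l W' (W `&` W') oW' oI _ s1' s2' e'); by move=> y [].
Qed.

Lemma exist_irr (A : Type) (P : A -> Prop) a b (pa : P a) (pb : P b) :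
  a = b -> exist P a pa = exist P b pb.
Proof. by move=> e; subst; rewrite (Prop_irrelevance pa pb). Qed.

Definition stalk := {P : set germ | exists g, P = grl g}.
HB.instance Definition _ := gen_eqMixin stalk.
HB.instance Definition _ := gen_choiceMixin stalk.

Definition cls (g : germ) : stalk := exist _ (grl g) (ex_intro _ g erefl).
Definition rep (P : stalk) : germ := projT1 (cid (proj2_sig P)).

Lemma cls_eq g h : cls g = cls h <-> grl g h.
Proof.
split.
  move=> e; have E : grl g = grl h := congr1 sval e.
  by rewrite E; exact: grel_refl.
move=> gh; apply: exist_irr.
apply/funext => l; apply/propext; split.
  by move/(grel_trans (grel_sym gh)).
by move/(grel_trans gh).
Qed.

Lemma repK P : cls (rep P) = P.
Proof.
rewrite /rep; case: cid => g /= e; case: P e => P pP /= e.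
by apply: exist_irr.
Qed.

Lemma rep_cls g : grl (rep (cls g)) g.
Proof. by apply/cls_eq; rewrite repK. Qed.

Definition ev (g : germ) W : F W := res F (gV g) W (gs g).

Definition gadd (g h : germ) : germ :=
  @Germ (gV g `&` gV h) (openI (gop g) (gop h)) (conj (gin g) (gin h))
    (res F (gV g) _ (gs g) + res F (gV h) _ (gs h)).
Definition gopp (g : germ) : germ := @Germ (gV g) (gop g) (gin g) (- gs g).
Definition gscale (a : k) (g : germ) : germ := @Germ (gV g) (gop g) (gin g) (a *: gs g).
Definition gzero : germ := @Germ setT openT I 0.

Lemma ev_comp g W : open W -> W `<=` gV g -> forall W', open W' -> W' `<=` W ->
  res F W W' (ev g W) = ev g W'.
Proof. by move=> oW sW W' oW' sW'; rewrite /ev (res_comp (gop g) oW oW' sW' sW). Qed.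

Lemma ev_add g h W : open W -> W `<=` gV g `&` gV h ->
  ev (gadd g h) W = ev g W + ev h W.
Proof.
move=> oW sW; rewrite /ev /= linearD /=.
have oI := openI (gop g) (gop h).
rewrite (res_comp (gop g) oI oW sW) ?(res_comp (gop h) oI oW sW) //; by move=> y [].
Qed.

Lemma ev_opp g W : ev (gopp g) W = - ev g W.
Proof. by rewrite /ev /= linearN. Qed.
Lemma ev_scale a g W : ev (gscale a g) W = a *: ev g W.
Proof. by rewrite /ev /= linearZ. Qed.
Lemma ev_zero W : ev gzero W = 0.
Proof. by rewrite /ev /= linear0. Qed.

Lemma grelE g h W : open W -> W x -> W `<=` gV g -> W `<=` gV h -> ev g W = ev h W -> grl g h.
Proof. by move=> *; exists W. Qed.

Lemma grel_ev g h : grl g h -> exists W, open W /\ W x /\ W `<=` gV g /\ W `<=` gV h /\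
  ev g W = ev h W /\ (forall W', open W' -> W' `<=` W -> ev g W' = ev h W').
Proof.
case=> W [oW [Wx [s1 [s2 e]]]]; exists W; do 5 (split => //).
by move=> W' oW' sW'; apply: (grel_shrink oW oW' sW' s1 s2 e).
Qed.

Lemma gadd_compat g g' h h' : grl g g' -> grl h h' -> grl (gadd g h) (gadd g' h').
Proof.
move=> /grel_ev [W1 [o1 [x1 [s1 [s1' [_ e1]]]]]] /grel_ev [W2 [o2 [x2 [s2 [s2' [_ e2]]]]]].
have oW := openI o1 o2.
apply: (@grelE _ _ (W1 `&` W2)) => //.
- by move=> y [/s1 ? /s2 ?].
- by move=> y [/s1' ? /s2' ?].
rewrite !ev_add //; first by rewrite e1 ?e2 //; move=> y [].
- by move=> y [/s1' ? /s2' ?].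
- by move=> y [/s1 ? /s2 ?].
Qed.

Lemma gopp_compat g g' : grl g g' -> grl (gopp g) (gopp g').
Proof.
case=> W [oW [Wx [s1 [s2 e]]]]; exists W; do 4 (split => //).
by rewrite -!/(ev _ _) !ev_opp; congr (- _).
Qed.

Lemma gscale_compat a g g' : grl g g' -> grl (gscale a g) (gscale a g').
Proof.
case=> W [oW [Wx [s1 [s2 e]]]]; exists W; do 4 (split => //).
by rewrite -!/(ev _ _) !ev_scale; congr (_ *: _).
Qed.

Definition sadd (P Q : stalk) := cls (gadd (rep P) (rep Q)).
Definition sopp (P : stalk) := cls (gopp (rep P)).
Definition sscale a (P : stalk) := cls (gscale a (rep P)).
Definition szero := cls gzero.

Lemma sadd_cls g h : sadd (cls g) (cls h) = cls (gadd g h).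
Proof. by apply/cls_eq; apply: gadd_compat; exact: rep_cls. Qed.
Lemma sopp_cls g : sopp (cls g) = cls (gopp g).
Proof. by apply/cls_eq; apply: gopp_compat; exact: rep_cls. Qed.
Lemma sscale_cls a g : sscale a (cls g) = cls (gscale a g).
Proof. by apply/cls_eq; apply: gscale_compat; exact: rep_cls. Qed.

Lemma cls_surj (P : stalk) : exists g, P = cls g.
Proof. by exists (rep P); rewrite repK. Qed.

Lemma grel_dom g h : (forall W, open W -> W `<=` gV g `&` gV h -> ev g W = ev h W) -> grl g h.
Proof.
move=> H; have oW := openI (gop g) (gop h).
apply: (@grelE _ _ (gV g `&` gV h) oW).
- by split; exact: gin.
- by move=> y [].
- by move=> y [].
- by apply: H.
Qed.

Ltac sub_tac sW := let y := fresh "y" in move=> y /sW /=; tauto.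

Let saddA : associative sadd.
Proof.
move=> P Q R; case: (cls_surj P) => g ->; case: (cls_surj Q) => h ->; case: (cls_surj R) => l ->.
rewrite !sadd_cls; apply/cls_eq; apply: grel_dom => W oW sW.
by rewrite !ev_add ?addrA //; sub_tac sW.
Qed.

Let saddC : commutative sadd.
Proof.
move=> P Q; case: (cls_surj P) => g ->; case: (cls_surj Q) => h ->.
rewrite !sadd_cls; apply/cls_eq; apply: grel_dom => W oW sW.
by rewrite !ev_add 1?addrC //; sub_tac sW.
Qed.

Let sadd0 : left_id szero sadd.
Proof.
move=> P; case: (cls_surj P) => g ->.
rewrite !sadd_cls; apply/cls_eq; apply: grel_dom => W oW sW.
by rewrite !ev_add ?ev_zero ?add0r //; sub_tac sW.
Qed.

HB.instance Definition _ := @GRing.isNmodule.Build stalk szero sadd saddA saddC sadd0.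

Let saddN : left_inverse (szero : stalk) sopp sadd.
Proof.
move=> P; case: (cls_surj P) => g ->.
rewrite sopp_cls !sadd_cls; apply/cls_eq; apply: grel_dom => W oW sW.
by rewrite !ev_add ?ev_zero ?ev_opp ?addNr //; sub_tac sW.
Qed.
HB.instance Definition _ := @GRing.Nmodule_isZmodule.Build stalk sopp saddN.

Let ssA a b P : sscale a (sscale b P) = sscale (a * b) P.
Proof.
case: (cls_surj P) => g ->.
rewrite !sscale_cls; apply/cls_eq; apply: grel_dom => W oW sW.
by rewrite !ev_scale scalerA.
Qed.
Let ss1 : left_id 1 sscale.
Proof.
move=> P; case: (cls_surj P) => g ->.
rewrite !sscale_cls; apply/cls_eq; apply: grel_dom => W oW sW.
by rewrite !ev_scale scale1r.
Qed.
Let ssDr : right_distributive sscale +%R.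
Proof.
move=> a P Q; case: (cls_surj P) => g ->; case: (cls_surj Q) => h ->.
rewrite -[cls g + cls h]/(sadd (cls g) (cls h)) sadd_cls !sscale_cls -[cls _ + cls _]/(sadd _ _) sadd_cls; apply/cls_eq; apply: grel_dom => W oW sW.
by rewrite ev_scale !ev_add ?ev_scale ?scalerDr //; sub_tac sW.
Qed.
Let ssDl P : {morph sscale^~ P : a b / a + b}.
Proof.
move=> a b; case: (cls_surj P) => g ->.
rewrite !sscale_cls -[cls _ + cls _]/(sadd _ _) sadd_cls; apply/cls_eq; apply: grel_dom => W oW sW.
by rewrite ev_add ?ev_scale ?scalerDl //; sub_tac sW.
Qed.
HB.instance Definition _ := @GRing.Zmodule_isLmodule.Build k stalk sscale ssA ss1 ssDr ssDl.

End Stalk.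


Unset Implicit Arguments. Unset Strict Implicit.

Section Godement.
Variables (k : fieldType) (T : topologicalType) (F : presheaf k T).

Definition GS (U : set T) : lmodType k := dprod (fun p : {x : T | U x} => stalk F (sval p)).

Definition gresf (U V : set T) (s : GS U) : GS V := fun p =>
  match pselect (U (sval p)) with left q => s (exist _ (sval p) q) | right _ => 0 end.

Arguments gresf : clear implicits.


Lemma gresf_lin U V : linear (gresf U V).
Proof.
move=> a s t; apply: functional_extensionality_dep => p.
have -> : (a *: gresf U V s + gresf U V t) p = a *: gresf U V s p + gresf U V t p by [].
have -> : (a *: s + t) = (fun q => a *: s q + t q) by [].
rewrite /gresf /=; destruct (pselect (U (sval p))) as [q|q]; first done.
by rewrite scaler0 addr0.
Qed.


Section Lin.
Variables U0 V0 : set T.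
Definition gresL := gresf U0 V0.
HB.instance Definition _ := GRing.isLinear.Build k (GS U0) (GS V0) *:%R gresL (@gresf_lin U0 V0).
End Lin.


Lemma gres_id U (s : GS U) : gresf U U s = s.
Proof.
apply: functional_extensionality_dep => -[y q]; rewrite /gresf /=.
case: pselect => q' //; by rewrite (Prop_irrelevance q' q).
Qed.

Lemma gres_comp U V W (s : GS U) : W `<=` V -> gresf V W (gresf U V s) = gresf U W s.
Proof.
move=> sWV; apply: functional_extensionality_dep => -[y q]; rewrite /gresf /=.
case: pselect => q1 //=; last by exfalso; exact: q1 (sWV _ q).
Qed.

Definition Gp : presheaf k T :=
  @Presheaf k T GS (fun U V => gresL U V) (fun U _ s => gres_id U s)
    (fun U V W _ _ _ sWV _ s => gres_comp U V W s sWV).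

Lemma pick_cover (I : Type) (C : I -> set T) y : (\bigcup_i C i) y -> {i : I | C i y}.
Proof. by move=> H; apply: cid; case: H => i _ Ci; exists i. Qed.

Lemma in_cover (U : set T) (I : Type) (C : I -> set T) y : U = \bigcup_i C i -> U y -> (\bigcup_i C i) y.
Proof. by move=> ->. Qed.

Lemma Gp_sheaf : is_sheaf Gp.
Proof.
move=> U I C oU oC UC; split.
  move=> s H; apply: functional_extensionality_dep => -[y q].
  have : (\bigcup_i C i) y by rewrite -UC.
  case=> i _ Ci.
  have := congr1 (fun f : GS (C i) => f (exist _ y Ci)) (H i).
  rewrite /= /gresL /gresf /=; case: pselect => q' //=.
  by rewrite (Prop_irrelevance q' q).
move=> s comp.
pose ix (p : {y : T | U y}) := pick_cover _ _ _ (in_cover _ _ _ _ UC (proj2_sig p)).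
pose t : GS U := fun p => s (sval (ix p)) (exist _ (sval p) (proj2_sig (ix p))).
exists t => i; apply: functional_extensionality_dep => -[y q].
rewrite /= /gresL /gresf /=; case: pselect => qU /=; last first.
  by exfalso; apply: qU; rewrite UC; exists i.
rewrite /t /=; case: (ix _) => j qj /=.
have := congr1 (fun f : GS (C j `&` C i) => f (exist _ y (conj qj q))) (comp j i).
rewrite /= /gresL /gresf /=.
case: pselect => a; last by exfalso.
case: pselect => b; last by exfalso.
by rewrite (Prop_irrelevance a qj) (Prop_irrelevance b q).
Qed.


Lemma relcpt_II (V U W : set T) : locally_weakly_quasi_compact T ->
  relcpt V U -> relcpt V W -> relcpt V (U `&` W).
Proof.
move=> [_ [L2 _]] hU hW.
have := L2 U W V V (proj1 (proj2 hU)) (proj1 (proj2 hW)) hU hW.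
by rewrite setIid.
Qed.

Lemma Gp_csoft : locally_weakly_quasi_compact T -> c_soft Gp.
Proof.
move=> L V W _ _ hVW U s hVU.
exists (gresL U W s), (U `&` W); split; first exact: relcpt_II.
split => //.
by rewrite /= /gresL gres_comp //; move=> y [].
Qed.

Definition phif (U : set T) (s : F U) : GS U := fun p =>
  match pselect (open U) with
  | left oU => cls (@Germ _ _ F (sval p) U oU (proj2_sig p) s)
  | right _ => 0 end.

Lemma ev_germ y U oU (yU : U y) (s : F U) W :
  ev (@Germ _ _ F y U oU yU s) W = res F U W s.
Proof. by []. Qed.

Lemma phif_lin U : linear (phif U).
Proof.
move=> a s t; apply: functional_extensionality_dep => p.
have -> : (a *: phif U s + phif U t) p = a *: phif U s p + phif U t p by [].
rewrite /phif; case: pselect => oU; last by rewrite scaler0 addr0.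
rewrite -[a *: cls _]/(sscale _ _) sscale_cls -[cls _ + cls _]/(sadd _ _) sadd_cls.
apply/cls_eq; apply: grel_dom => W oW sW.
rewrite ev_add /=; last by move=> z /sW [].
  by rewrite ev_scale !ev_germ linearD linearZ.
done.
Qed.

Section LinP.
Variable U0 : set T.
Definition phiL := phif U0.
HB.instance Definition _ := GRing.isLinear.Build k (F U0) (GS U0) *:%R phiL (@phif_lin U0).
End LinP.

Definition phi : morphism F Gp := fun U => phiL U.

Lemma phi_natural : natural phi.
Proof.
move=> U V oU oV sVU s; apply: functional_extensionality_dep => -[y q].
rewrite /= /phiL /phif /gresL /gresf /=.
case: pselect => // oV'; case: pselect => qU; last by exfalso; apply: qU; exact: sVU.
case: pselect => // oU'.
apply/cls_eq; apply: grel_dom => W oW sW.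
by rewrite !ev_germ res_comp //; move=> z /sW [].
Qed.

Lemma phi_mono : is_sheaf F -> mono phi.
Proof.
move=> shF U oU.
suff H0 : forall s : F U, phi U s = 0 -> s = 0.
  move=> s1 s2 e; apply/eqP; rewrite -subr_eq0; apply/eqP; apply: H0.
  by rewrite linearB /= e subrr.
move=> s H.
have ex : forall p : {y : T | U y}, exists W, open W /\ W (sval p) /\ W `<=` U /\ res F U W s = 0.
  move=> [y q]; have := congr1 (fun f : GS U => f (exist _ y q)) H.
  rewrite /= /phiL /phif; case: pselect => // oU' E.
  have : @grl _ _ F y (@Germ _ _ F y U oU' q s) (@gzero _ _ F y) by apply/cls_eq; exact: E.
  case=> W [oW [Wx [sWU [_ e]]]]; exists W; do 3 (split => //).
  by move: e => /= ->; rewrite linear0.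
pose C (p : {y : T | U y}) := sval (cid (ex p)).
have hC p : open (C p) /\ C p (sval p) /\ C p `<=` U /\ res F U (C p) s = 0 := proj2_sig (cid (ex p)).
have UC : U = \bigcup_p C p.
  apply/seteqP; split.
    by move=> y q; exists (exist _ y q) => //; case: (hC (exist _ y q)) => _ [].
  by move=> y [p _ Cy]; case: (hC p) => _ [_ [sub _]]; exact: sub.
have [uniq _] := shF U _ C oU (fun p => proj1 (hC p)) UC.
by apply: uniq => p; case: (hC p) => _ [_ [_ ->]].
Qed.

Lemma godement_embed : locally_weakly_quasi_compact T -> is_sheaf F ->
  exists (G : presheaf k T) (phi : morphism F G),
       is_sheaf G /\ c_soft G /\ natural phi /\ mono phi.
Proof.
move=> L shF; exists Gp, phi; split; first exact: Gp_sheaf.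
split; first exact: Gp_csoft.
split; first exact: phi_natural.
exact: phi_mono.
Qed.

End Godement.


Set Implicit Arguments. Unset Strict Implicit. Unset Printing Implicit Defensive.

Section Relcpt.
Variable T : topologicalType.

Lemma rc_openl (V U : set T) : relcpt V U -> open V. Proof. by case. Qed.
Lemma rc_openr (V U : set T) : relcpt V U -> open U. Proof. by case=> _ []. Qed.
Lemma rc_sub (V U : set T) : relcpt V U -> V `<=` U. Proof. by case=> _ [_ []]. Qed.

Lemma rc_big (V U U' : set T) : relcpt V U -> open U' -> U `<=` U' -> relcpt V U'.
Proof.
move=> [oV [oU [sVU H]]] oU' sUU'; split => //; split => //; split.
  by move=> y /sVU /sUU'.
move=> I C oC cov; apply: H => //; by move=> y /sUU' /cov.
Qed.

Lemma rc_small (V V' U : set T) : relcpt V U -> open V' -> V' `<=` V -> relcpt V' U.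
Proof.
move=> [oV [oU [sVU H]]] oV' sV'V; split => //; split => //; split.
  by move=> y /sV'V /sVU.
move=> I C oC cov; have [J [fJ sJ]] := H I C oC cov.
by exists J; split => // y /sV'V /sJ.
Qed.

Lemma rc_T (V U : set T) : relcpt V U -> relcpt V setT.
Proof. by move=> h; apply: (rc_big h openT). Qed.

Lemma rc_U (V1 U1 V2 U2 : set T) : relcpt V1 U1 -> relcpt V2 U2 -> relcpt (V1 `|` V2) (U1 `|` U2).
Proof.
move=> [oV1 [oU1 [s1 H1]]] [oV2 [oU2 [s2 H2]]]; split; first exact: openU.
split; first exact: openU.
split; first by move=> y [/s1|/s2]; [left|right].
move=> I C oC cov.
have [J1 [f1 c1]] := H1 I C oC (fun y h => cov y (or_introl h)).
have [J2 [f2 c2]] := H2 I C oC (fun y h => cov y (or_intror h)).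
exists (J1 `|` J2); split; first by rewrite finite_setU.
move=> y [/c1|/c2] [i Ji Ci]; exists i => //; [left|right] => //.
Qed.

Lemma rc_0 (U : set T) : open U -> relcpt set0 U.
Proof.
move=> oU; split; first exact: open0.
split => //; split => //.
by move=> I C _ _; exists set0; split => //.
Qed.

End Relcpt.

Section RcList.
Variable T : topologicalType.
Lemma rc_list (V U : set T) (I : Type) (C : I -> set T) :
  relcpt V U -> (forall i, open (C i)) -> U `<=` \bigcup_i C i ->
  exists s : seq {classic I}, forall y, V y -> exists i, i \in s /\ C i y.
Proof.
move=> [_ [_ [_ H]]] oC cov; have [J [fJ cJ]] := H I C oC cov.
have /finite_seqP [s Js] := (fJ : @finite_set {classic I} J).
exists s => y /cJ [i Ji Ci]; exists i; split => //.
by move: Ji; rewrite Js.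
Qed.
End RcList.


Set Implicit Arguments. Unset Strict Implicit. Unset Printing Implicit Defensive.

Section Exact.
Variables (k : fieldType) (T : topologicalType).
Variables (F' F F'' : presheaf k T) (f : morphism F' F) (g : morphism F F'').
Hypotheses (shF' : is_sheaf F') (shF : is_sheaf F) (shF'' : is_sheaf F'').
Hypothesis SE : short_exact f g.

Lemma nat_f : natural f. Proof. by case: SE. Qed.
Lemma nat_g : natural g. Proof. by case: SE => _ []. Qed.
Lemma natf U V : open U -> open V -> V `<=` U -> forall s, f V (res F' U V s) = res F U V (f U s).
Proof. by move=> *; apply: nat_f. Qed.
Lemma natg U V : open U -> open V -> V `<=` U -> forall s, g V (res F U V s) = res F'' U V (g U s).
Proof. by move=> *; apply: nat_g. Qed.
Lemma inj_f U : open U -> injective (f U). Proof. by case: SE => _ [_ [H _]]; exact: H. Qed.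
Lemma gf0 U : open U -> forall s, g U (f U s) = 0. Proof. by case: SE => _ [_ [_ [H _]]]; exact: H. Qed.
Lemma kerloc U : open U -> forall s : F U, g U s = 0 ->
     forall x, U x -> exists V, open V /\ V x /\ V `<=` U /\
       exists s' : F' V, f V s' = res F U V s.
Proof. by case: SE => _ [_ [_ [_ [H _]]]]; exact: H. Qed.
Lemma surjloc U : open U -> forall s : F'' U, forall x, U x ->
     exists V, open V /\ V x /\ V `<=` U /\
       exists t : F V, g V t = res F'' U V s.
Proof. by case: SE => _ [_ [_ [_ [_ H]]]]; exact: H. Qed.

Lemma sheaf_uniq (G : presheaf k T) (shG : is_sheaf G) (U : set T) (I : Type) (C : I -> set T) :
  open U -> (forall i, open (C i)) -> U = \bigcup_i C i ->
  forall s t : G U, (forall i, res G U (C i) s = res G U (C i) t) -> s = t.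
Proof.
move=> oU oC UC s t H; apply/eqP; rewrite -subr_eq0; apply/eqP.
have [u _] := shG U I C oU oC UC; apply: u => i.
by rewrite linearB /= H subrr.
Qed.

Lemma kernel U : open U -> forall s : F U, g U s = 0 -> exists c : F' U, f U c = s.
Proof.
move=> oU s gs.
have ex : forall p : {y : T | U y}, exists V, open V /\ V (sval p) /\ V `<=` U /\
       exists s' : F' V, f V s' = res F U V s.
  by move=> [y q]; exact: kerloc.
pose C p := sval (cid (ex p)).
have hC p : open (C p) /\ C p (sval p) /\ C p `<=` U /\
       exists s' : F' (C p), f (C p) s' = res F U (C p) s := proj2_sig (cid (ex p)).
pose cp p := sval (cid (proj2 (proj2 (proj2 (hC p))))).
have hcp p : f (C p) (cp p) = res F U (C p) s := proj2_sig (cid (proj2 (proj2 (proj2 (hC p))))).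
have oC p : open (C p) by case: (hC p).
have sC p : C p `<=` U by case: (hC p) => _ [_ []].
have UC : U = \bigcup_p C p.
  apply/seteqP; split.
    by move=> y q; exists (exist _ y q) => //; case: (hC (exist _ y q)) => _ [].
  by move=> y [p _ Cy]; exact: (sC p).
have [_ glue] := @shF' U _ C oU oC UC.
have [c hc] : exists c : F' U, forall p, res F' U (C p) c = cp p.
  apply: glue => p q.
  have oI := openI (oC p) (oC q).
  apply: (inj_f oI).
  rewrite !natf //; try by move=> y [].
  rewrite !hcp !res_comp //; by move=> y [/sC].
exists c; apply: (sheaf_uniq shF oU oC UC) => p.
by rewrite -natf // hc hcp.
Qed.

Hypothesis LW : locally_weakly_quasi_compact T.
Hypothesis cs' : c_soft F'.

Lemma L2 (U V U' V' : set T) : open U -> open V -> relcpt U' U -> relcpt V' V ->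
  relcpt (U' `&` V') (U `&` V).
Proof. by case: LW => _ [H _]; exact: H. Qed.
Lemma L3 (U U' : set T) : open U -> relcpt U' U -> exists W, relcpt W U /\ relcpt U' W.
Proof. by case: LW => _ [_ H]; exact: H. Qed.
Lemma L1 (U : set T) : open U -> forall x, U x -> forall N, nbhs x N ->
     exists V, relcpt V U /\ V x /\ V `<=` N.
Proof. by case: LW => H _; exact: H. Qed.

Lemma glue2 (U : set T) (u : F'' U) M P N O (a : F P) (b : F O) : open U ->
  relcpt M P -> P `<=` U -> g P a = res F'' U P u ->
  relcpt N O -> O `<=` U -> g O b = res F'' U O u ->
  exists P', open P' /\ P' `<=` U /\ relcpt (M `|` N) P' /\
    exists s : F P', g P' s = res F'' U P' u.
Proof.
move=> oU hMP sPU ga hNO sOU gb.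
have oP := rc_openr hMP; have oO := rc_openr hNO.
have [M1 [hM1P hMM1]] := L3 oP hMP.
have [M2 [hM2P hM1M2]] := L3 oP hM1P.
have [N1 [hN1O hNN1]] := L3 oO hNO.
have oM1 := rc_openl hM1P; have oM2 := rc_openl hM2P; have oN1 := rc_openl hN1O.
have sM1M2 := rc_sub hM1M2; have sM2P := rc_sub hM2P; have sN1O := rc_sub hN1O.
have sM1P := rc_sub hM1P.
pose PO := P `&` O; have oPO : open PO := openI oP oO.
have ker : g PO (res F P PO a - res F O PO b) = 0.
  rewrite linearB /= !natg //; try by move=> y [].
  by rewrite ga gb !res_comp // ?subrr //; move=> y [] // /sPU.
have [c hc] := kernel oPO ker.
have hV : relcpt (M1 `&` N1) PO := L2 oP oO hM1P hN1O.
have oV : open (M1 `&` N1) := openI oM1 oN1.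
have [d [U' [hVU' [sU' e]]]] := cs' (rc_T hV) (rc_T hM2P)
   (rc_small hM1M2 oV (fun y (h : (M1 `&` N1) y) => proj1 h)) c hV.
have oU' := rc_openr hVU'; have sVU' := rc_sub hVU'.
pose a' := res F P M2 a - f M2 d.
have sPOP : PO `<=` P by move=> y [].
have sPOO : PO `<=` O by move=> y [].
have sU'M2 : U' `<=` M2 by move=> y /sU' [].
have sU'PO : U' `<=` PO by move=> y /sU' [].
have claim : forall Z, open Z -> Z `<=` M1 `&` N1 -> res F M2 Z a' = res F O Z b.
  move=> Z oZ sZ.
  have sZU' : Z `<=` U' by move=> y /sZ /sVU'.
  have sZPO : Z `<=` PO by move=> y /sZU' /sU'PO.
  have sZP : Z `<=` P by move=> y /sZPO /sPOP.
  have sZO : Z `<=` O by move=> y /sZPO /sPOO.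
  have sZM2 : Z `<=` M2 by move=> y /sZU' /sU'M2.
  rewrite /a' linearB /= res_comp //.
  have -> : res F M2 Z (f M2 d) = f Z (res F' PO Z c).
    rewrite -natf //.
    rewrite -(res_comp oM2 oU' oZ sZU' sU'M2).
    by rewrite e res_comp.
  rewrite natf // hc linearB /= !res_comp //.
  by rewrite opprB addrC subrK.
pose C (i : bool) := if i then M1 else N1.
pose sec (i : bool) : F (C i) :=
  if i as i0 return F (if i0 then M1 else N1) then res F M2 M1 a' else res F O N1 b.
have oC i : open (C i) by case: i.
have UC : M1 `|` N1 = \bigcup_i C i.
  apply/seteqP; split.
    by move=> y [h|h]; [exists true | exists false].
  by move=> y [[] _ h]; [left|right].
have oP' : open (M1 `|` N1) := openU oM1 oN1.
have [_ glue] := @shF (M1 `|` N1) _ C oP' oC UC.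
have [σ hσ] : exists σ : F (M1 `|` N1), forall i, res F (M1 `|` N1) (C i) σ = sec i.
  have oNM := openI oN1 oM1.
  have sMN1 : M1 `&` N1 `<=` M1 by move=> y [].
  have sMN2 : M1 `&` N1 `<=` N1 by move=> y [].
  have sNM1 : N1 `&` M1 `<=` N1 by move=> y [].
  have sNM2 : N1 `&` M1 `<=` M1 by move=> y [].
  apply: glue => -[] [] //=.
    by rewrite !res_comp // claim.
  rewrite !res_comp // claim //; by move=> y [].
have sP'U : M1 `|` N1 `<=` U by move=> y [/sM1P /sPU | /sN1O /sOU].
exists (M1 `|` N1); split => //; split => //; split; first exact: rc_U.
exists σ; apply: (sheaf_uniq shF'' oP' oC UC) => i.
rewrite -natg //; last by case: i => y /=; [left|right].
rewrite hσ res_comp //; last by case: i => y /=; [left|right].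
case: i => /=.
  rewrite natg // /a' linearB /= gf0 // subr0 natg // ga res_comp //.
  by rewrite res_comp //; move=> y /sM1M2.
by rewrite natg // gb res_comp.
Qed.

Lemma sec0 (G : presheaf k T) : is_sheaf G -> forall s t : G set0, s = t.
Proof.
move=> shG s t; apply: (@sheaf_uniq G shG set0 False (fun _ => set0) open0 (fun _ => open0)).
  by apply/seteqP; split => y //; case.
by case.
Qed.

Lemma liftsec (U : set T) (u : F'' U) V : open U -> relcpt V U ->
  exists O, open O /\ O `<=` U /\ relcpt V O /\ exists s : F O, g O s = res F'' U O u.
Proof.
move=> oU hVU.
have [V2 [hV2U hVV2]] := L3 oU hVU.
have sV2U := rc_sub hV2U; have oV2 := rc_openl hV2U; have oV := rc_openl hVU.
have ex : forall p : {y : T | V2 y}, exists ON : set T * set T, open ON.1 /\ ON.1 `<=` U /\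
    relcpt ON.2 ON.1 /\ ON.2 (sval p) /\ exists t : F ON.1, g ON.1 t = res F'' U ON.1 u.
  move=> [y q] /=.
  have [O [oO [Oy [sOU [t ht]]]]] := surjloc oU u (sV2U _ q).
  have oOV := openI oO oV2.
  have [N [hN [Ny sN]]] := L1 oOV (conj Oy q) (open_nbhs_nbhs (conj oOV (conj Oy q))).
  exists (O, N); split => //; split => //; split; last by split => //; exists t.
  by apply: (rc_big hN oO); move=> z [].
pose ON p := sval (cid (ex p)).
have hON p := proj2_sig (cid (ex p)).
pose Op p := (ON p).1; pose Np p := (ON p).2.
have oNp p : open (Np p) by case: (hON p) => _ [_ [/rc_openl]].
have cov : V2 `<=` \bigcup_p Np p.
  by move=> y q; exists (exist _ y q) => //; case: (hON (exist _ y q)) => _ [_ [_ []]].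
have [sq hsq] := rc_list hVV2 oNp cov.
pose Un (l : seq {classic {y : T | V2 y}}) := foldr (fun i A => A `|` Np i) set0 l.
have claim : forall l, exists P, open P /\ P `<=` U /\ relcpt (Un l) P /\
    exists s : F P, g P s = res F'' U P u.
  elim => [|i l [P [oP [sPU [hP [a ha]]]]]].
    exists set0; split; first exact: open0.
    split => //; split; first exact: rc_0 open0.
    by exists 0; apply: sec0.
  case: (hON i) => oO [sOU [hNO [_ [b hb]]]].
  have [P' [oP' [sP'U [hP' h']]]] := glue2 oU hP sPU ha hNO sOU hb.
  by exists P'.
have [P [oP [sPU [hP h]]]] := claim sq.
exists P; split => //; split => //; split => //.
apply: (rc_small hP oV) => y /hsq [i [isq Ni]].
elim: sq isq {hsq hP h claim} => // j l IH; rewrite inE => /orP [/eqP <-|/IH].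
  by right.
by left.
Qed.

Lemma quot_csoft : c_soft F -> c_soft F''.
Proof.
move=> csF V W hV hW hVW U s hVU.
have oU := rc_openr hVU; have oW := rc_openr hVW.
have [O [oO [sOU [hVO [t ht]]]]] := liftsec s oU hVU.
have [t' [U' [hVU' [sU' e]]]] := csF V W hV hW hVW O t hVO.
have oU' := rc_openr hVU'.
have sU'O : U' `<=` O by move=> y /sU' [].
have sU'W : U' `<=` W by move=> y /sU' [].
exists (g W t'), U'; split => //; split; first by move=> y /sU' [/sOU].
by rewrite -natg // e natg // ht res_comp.
Qed.
End Exact.


Unset Implicit Arguments. Unset Strict Implicit.

Section Surj.
Variables (k : fieldType) (T : topologicalType).
Variables (F' F F'' : presheaf k T) (f : morphism F' F) (g : morphism F F'').
Hypotheses (shF' : is_sheaf F') (shF : is_sheaf F) (shF'' : is_sheaf F'').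
Hypothesis SE : short_exact f g.
Hypothesis LW : locally_weakly_quasi_compact T.
Hypothesis cs' : c_soft F'.
Variable W : nat -> set T.
Hypothesis hW : forall n, relcpt (W n) setT.
Hypothesis hWW : forall n, relcpt (W n) (W n.+1).
Hypothesis cover : \bigcup_n W n = setT.
Variable u : F'' setT.

Let oW n : open (W n) := rc_openl (hW n).
Let sWS n : W n `<=` W n.+1 := rc_sub (hWW n).
Let natg' := natg SE.
Let natf' := natf SE.

Lemma liftT n : exists t : F (W n), g (W n) t = res F'' setT (W n) u.
Proof.
have [O [oO [_ [hO [b hb]]]]] := liftsec shF' shF shF'' SE LW cs' u openT (hW n).
exists (res F O (W n) b); rewrite natg' //; last exact: rc_sub hO.
by rewrite hb (res_comp openT oO (oW n) (rc_sub hO)).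
Qed.

Lemma stepT n (t : F (W n.+1)) : g (W n.+1) t = res F'' setT (W n.+1) u ->
  exists t' : F (W n.+2), g (W n.+2) t' = res F'' setT (W n.+2) u /\
     res F (W n.+2) (W n) t' = res F (W n.+1) (W n) t.
Proof.
move=> ht.
have [b hb] := liftT n.+2.
have ker : g (W n.+1) (t - res F (W n.+2) (W n.+1) b) = 0.
  rewrite linearB /= natg' // hb (res_comp openT (oW n.+2) (oW n.+1) (sWS n.+1)) //.
  by rewrite ht subrr.
have [c hc] := kernel shF' shF SE (oW n.+1) ker.
have hnn2 : relcpt (W n) (W n.+2) := rc_big (hWW n) (oW n.+2) (sWS n.+1).
have [d [U' [hVU' [sU' e]]]] := cs' _ _ (hW n) (hW n.+2) hnn2 _ c (hWW n).
have oU' := rc_openr hVU'; have sVU' := rc_sub hVU'.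
have sU'1 : U' `<=` W n.+1 by move=> y /sU' [].
have sU'2 : U' `<=` W n.+2 by move=> y /sU' [].
have sn1 := sWS n; have sn2 := sWS n.+1.
have sn02 : W n `<=` W n.+2 by move=> y /sn1 /sn2.
exists (res F (W n.+2) (W n.+2) b + f (W n.+2) d); split.
  by rewrite linearD /= gf0 // addr0 res_id // natg' ?hb.
rewrite linearD /= -natf' // -(@res_comp _ _ F' _ _ _ (oW _) oU' (oW n) sVU' sU'2) e (@res_comp _ _ F' _ _ _ (oW n.+1) oU' (oW n) sVU' sU'1).
rewrite natf' // hc linearB /= !res_comp //.
by rewrite addrC subrK.
Qed.

Fixpoint ts n : {t : F (W n.+1) | g (W n.+1) t = res F'' setT (W n.+1) u} :=
  match n with
  | 0 => cid (liftT 1)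
  | m.+1 => let p := ts m in let q := cid (stepT m (sval p) (proj2_sig p)) in
            exist _ (sval q) (proj1 (proj2_sig q))
  end.

Lemma ts_compat n : res F (W n.+2) (W n) (sval (ts n.+1)) = res F (W n.+1) (W n) (sval (ts n)).
Proof. by rewrite /=; case: cid => t [_ ->]. Qed.

Lemma Wmono i d : W i `<=` W (i + d).
Proof.
elim: d => [|d IH]; first by rewrite addn0.
by rewrite addnS => y /IH /(sWS (i + d)).
Qed.

Lemma ts_key i d Z : open Z -> Z `<=` W i ->
  res F (W (i + d).+1) Z (sval (ts (i + d))) = res F (W i.+1) Z (sval (ts i)).
Proof.
move=> oZ sZ; elim: d => [|d IH]; first by rewrite addn0.
have sZd : Z `<=` W (i + d) by move=> y /sZ /(Wmono i d).
have s1 := sWS (i + d); have s2 := sWS (i + d).+1.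
have s12 : W (i + d) `<=` W (i + d).+2 by move=> y /s1 /s2.
rewrite addnS -(res_comp (oW _) (oW (i + d)) oZ sZd s12) ts_compat.
by rewrite res_comp // -IH.
Qed.

Definition sig_ n : F (W n) := res F (W n.+1) (W n) (sval (ts n)).

Lemma sig_claim i j Z : open Z -> Z `<=` W i `&` W j ->
  res F (W i) Z (sig_ i) = res F (W j) Z (sig_ j).
Proof.
move=> oZ sZ.
have sZi : Z `<=` W i by move=> y /sZ [].
have sZj : Z `<=` W j by move=> y /sZ [].
rewrite /sig_ !res_comp //.
case: (leqP i j) => h.
  by rewrite -(subnKC h) ts_key.
by rewrite -(subnKC (ltnW h)) ts_key.
Qed.

Lemma surj_main : exists s : F setT, g setT s = u.
Proof.
have cov : setT = \bigcup_n W n by rewrite cover.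
have [_ glue] := shF setT nat W openT oW cov.
have [s hs] := glue sig_ (fun i j => sig_claim i j (W i `&` W j) (openI (oW i) (oW j)) (fun y h => h)).
exists s; apply: (sheaf_uniq shF'' openT oW cov) => n.
rewrite -natg' // ?hs; last exact: openT.
rewrite /sig_ natg' //; case: (ts n) => t /= ->.
by rewrite res_comp //; exact: openT.
Qed.
End Surj.

Section Wseq.
Variables (T : topologicalType).
Hypothesis LW : locally_weakly_quasi_compact T.
Variable Un : nat -> set T.
Hypothesis hUn : forall n, relcpt (Un n) setT.
Hypothesis cov : \bigcup_n Un n = setT.

Lemma wstep (A : {A : set T | relcpt A setT}) n :
  exists B : set T, relcpt B setT /\ relcpt (sval A `|` Un n) B.
Proof.
case: A => A hA /=.
have h : relcpt (A `|` Un n) setT by have := rc_U hA (hUn n); rewrite setUid.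
have [_ [_ L3]] := LW.
exact: (L3 setT _ openT h).
Qed.

Fixpoint Ws n : {A : set T | relcpt A setT} :=
  match n with
  | 0 => exist _ set0 (rc_0 openT)
  | m.+1 => let B := cid (wstep (Ws m) m) in exist _ (sval B) (proj1 (proj2_sig B))
  end.

Lemma Ws_exists : exists W : nat -> set T, (forall n, relcpt (W n) setT) /\
  (forall n, relcpt (W n) (W n.+1)) /\ \bigcup_n W n = setT.
Proof.
exists (fun n => sval (Ws n)); split; first by move=> n; exact: (proj2_sig (Ws n)).
have key n : relcpt (sval (Ws n) `|` Un n) (sval (Ws n.+1)).
  by rewrite /=; case: cid => B [].
split.
  move=> n; apply: (rc_small (key n) (rc_openl (proj2_sig (Ws n)))).
  by move=> y h; left.
apply/seteqP; split => // y _.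
have : (\bigcup_n Un n) y by rewrite cov.
case=> n _ hy; exists n.+1 => //.
by apply: (rc_sub (key n)); right.
Qed.
End Wseq.


Unset Implicit Arguments.
Theorem mainTheorem20 (k : fieldType) (T : topologicalType) :
  locally_weakly_quasi_compact T ->
  (exists Un : nat -> set T,
     (forall n, relcpt (Un n) setT) /\ \bigcup_n Un n = setT) ->
  (forall F : presheaf k T, is_sheaf F ->
     exists (G : presheaf k T) (phi : morphism F G),
       is_sheaf G /\ c_soft G /\ natural phi /\ mono phi) /\
  (forall (F' F F'' : presheaf k T) (f : morphism F' F) (g : morphism F F''),
     is_sheaf F' -> is_sheaf F -> is_sheaf F'' -> short_exact f g ->
     c_soft F' -> c_soft F -> c_soft F'') /\
  (forall (F' F F'' : presheaf k T) (f : morphism F' F) (g : morphism F F''),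
     is_sheaf F' -> is_sheaf F -> is_sheaf F'' -> short_exact f g ->
     c_soft F' ->
     injective (f setT) /\
     (forall s : F setT, g setT s = 0 <-> exists s' : F' setT, f setT s' = s) /\
     (forall u : F'' setT, exists s : F setT, g setT s = u)).
Proof.
move=> LW [Un [hUn cov]]; split.
  by move=> F shF; exact: godement_embed.
split.
  move=> F' F F'' f g sh' sh sh'' SE cs' cs.
  exact: (quot_csoft sh' sh sh'' SE LW cs' cs).
move=> F' F F'' f g sh' sh sh'' SE cs'; split.
  exact: (inj_f SE openT).
split.
  move=> s; split; first exact: (kernel sh' sh SE openT).
  by case=> s' <-; exact: (gf0 SE openT).
move=> u.
have [W [hW [hWW cW]]] := Ws_exists T LW Un hUn cov.
exact: (surj_main k T F' F F'' f g sh' sh sh'' SE LW cs' W hW hWW cW u).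
Qed.
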